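(* Let $H=K_2\vee\overline{K_2}$ (i.e. $K_4$ minus an edge), and let $v$ be a vertex of degree $2$ in $H$. Then the line graph $L(H)$ has no $f_{3,v}$-kernel-perfect orientation. Equivalently, $H$ is not $f_{3,v}$-edge-orientable.
   Context: $G_1\vee G_2$ denotes the join: the disjoint union of $G_1$ and $G_2$ plus all edges between them. $\overline{K_2}$ is the edgeless graph on $2$ vertices. An orientation of a graph is any digraph obtained by replacing each edge $uv$ with the arc $(u,v)$, with the arc $(v,u)$, or with both arcs. A kernel of a digraph $D$ is an independent set $S$ such that every vertex of $D-S$ has an out-neighbor in $S$. $D$ is kernel-perfect if every induced subdigraph of $D$ has a kernel. For $f:V\to\mathbb{N}$, an orientation $D$ is $f$-kernel-perfect if it is kernel-perfect and $f(x)\ge 1+d^+_D(x)$ for every vertex $x$. For $v\in V(H)$, $f_{3,v}:E(H)\to\mathbb{N}$ is defined by $f_{3,v}(e)=d_H(v)$ if $e$ is incident to $v$, and $f_{3,v}(e)=3$ otherwise. *)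

(* Defs.v *)
(* Simple graphs are symmetric irreflexive boolean relations
   on a finType; digraphs are arbitrary relations on a finType. *)
From HB Require Import structures.
From mathcomp Require Import all_boot.
Set Implicit Arguments. Unset Strict Implicit. Unset Printing Implicit Defensive.

Definition simple_graph (T : finType) (G : rel T) : Prop :=
  irreflexive G /\ symmetric G.

Definition deg (T : finType) (G : rel T) (x : T) : nat := #|[set y | G x y]|.

Definition join (T1 T2 : finType) (G1 : rel T1) (G2 : rel T2) : rel (T1 + T2)%type :=
  fun u w => match u, w with
             | inl x, inl y => G1 x y
             | inr x, inr y => G2 x y
             | _, _ => true
             end.

Definition Kn (n : nat) : rel 'I_n := fun x y => x != y.
Definition coKn (n : nat) : rel 'I_n := fun _ _ => false.

Definition Hgraph : rel ('I_2 + 'I_2)%type := join (@Kn 2) (@coKn 2).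

Definition is_edge (T : finType) (G : rel T) (e : {set T}) : bool :=
  [exists x, exists y, G x y && (e == [set x; y])].
Definition edge (T : finType) (G : rel T) := {e : {set T} | is_edge G e}.

Definition line_graph (T : finType) (G : rel T) : rel (edge G) :=
  fun e e' => (e != e') && (val e :&: val e' != set0).

Definition f3 (T : finType) (G : rel T) (v : T) : edge G -> nat :=
  fun e => if v \in val e then deg G v else 3.

Definition orientation (T : finType) (G : rel T) (D : rel T) : Prop :=
  (forall x y, D x y -> G x y) /\ (forall x y, G x y -> D x y || D y x).

Definition is_kernel_in (T : finType) (D : rel T) (A S : {set T}) : Prop :=
  S \subset A /\
  (forall x y, x \in S -> y \in S -> ~~ D x y) /\
  (forall x, x \in A :\: S -> exists2 y, y \in S & D x y).

Definition kernel_perfect (T : finType) (D : rel T) : Prop :=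
  forall A : {set T}, exists S : {set T}, is_kernel_in D A S.

Definition outdeg (T : finType) (D : rel T) (x : T) : nat := #|[set y | D x y]|.

Definition f_kernel_perfect (T : finType) (D : rel T) (f : T -> nat) : Prop :=
  kernel_perfect D /\ forall x, 1 + outdeg D x <= f x.

Arguments edge {T} G.
Arguments line_graph {T} G.
Arguments f3 {T} G v.

(* Main.v *)
Require Import Defs.
From mathcomp Require Import all_boot.
Set Implicit Arguments. Unset Strict Implicit. Unset Printing Implicit Defensive.

Lemma triangle_sink (T : finType) (D : rel T) (x y z : T) :
  kernel_perfect D -> x != y -> x != z -> y != z ->
  D x y || D y x -> D x z || D z x -> D y z || D z y ->
  [|| D y x && D z x, D x y && D z y | D x z && D y z].
Proof.
move=> kp nxy nxz nyz oxy oxz oyz.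
have [S [sub [ind dom]]] := kp [set x; y; z].
have inA : forall u, u \in [set x; y; z] -> [|| u == x, u == y | u == z].
  by move=> u; rewrite !inE -orbA.
have Ax : x \in [set x; y; z] by rewrite !inE eqxx.
have Ay : y \in [set x; y; z] by rewrite !inE eqxx orbT.
have Az : z \in [set x; y; z] by rewrite !inE eqxx !orbT.
have pick : forall u, u \in [set x; y; z] -> u \notin S ->
    exists2 w, w \in S & [/\ D u w & [|| w == x, w == y | w == z]].
  move=> u uA uS; have : u \in [set x; y; z] :\: S by rewrite inE uS uA.
  move/dom=> [w wS Duw].
  by exists w => //; split => //; apply: inA; apply: (subsetP sub).
case xS: (x \in S); case yS: (y \in S); case zS: (z \in S).
- by move: oxy; rewrite (negbTE (ind _ _ xS yS)) (negbTE (ind _ _ yS xS)).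
- by move: oxy; rewrite (negbTE (ind _ _ xS yS)) (negbTE (ind _ _ yS xS)).
- by move: oxz; rewrite (negbTE (ind _ _ xS zS)) (negbTE (ind _ _ zS xS)).
- have [w wS [Dyw /or3P[]/eqP ew]] := pick y Ay (negbT yS); subst w;
    try by rewrite ?yS ?zS in wS.
  have [w wS' [Dzw /or3P[]/eqP ew]] := pick z Az (negbT zS); subst w;
    try by rewrite ?yS ?zS in wS'.
  by rewrite Dyw Dzw.
- by move: oyz; rewrite (negbTE (ind _ _ yS zS)) (negbTE (ind _ _ zS yS)).
- have [w wS [Dxw /or3P[]/eqP ew]] := pick x Ax (negbT xS); subst w;
    try by rewrite ?xS ?zS in wS.
  have [w wS' [Dzw /or3P[]/eqP ew]] := pick z Az (negbT zS); subst w;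
    try by rewrite ?xS ?zS in wS'.
  by rewrite Dxw Dzw orbT.
- have [w wS [Dxw /or3P[]/eqP ew]] := pick x Ax (negbT xS); subst w;
    try by rewrite ?xS ?yS in wS.
  have [w wS' [Dyw /or3P[]/eqP ew]] := pick y Ay (negbT yS); subst w;
    try by rewrite ?xS ?yS in wS'.
  by rewrite Dxw Dyw !orbT.
- have [w wS [_ /or3P[]/eqP ew]] := pick x Ax (negbT xS); subst w;
    by rewrite ?xS ?yS ?zS in wS.
Qed.

Lemma outdeg_seq (T : finType) (D : rel T) x (s : seq T) :
  uniq s -> all (D x) s -> size s <= outdeg D x.
Proof.
move=> us /allP H; rewrite -(card_uniqP us) /outdeg.
apply: subset_leq_card; apply/subsetP => y ys; rewrite inE; exact: H.
Qed.

Lemma no2 (T : finType) (D : rel T) x a b :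
  a != b -> outdeg D x <= 1 -> ~~ (D x a && D x b).
Proof.
move=> nab H; apply/negP => /andP[h1 h2].
have := @outdeg_seq T D x [:: a; b]; rewrite /= inE nab h1 h2 => /(_ isT isT).
by move=> /(leq_trans)/(_ H).
Qed.

Lemma no3 (T : finType) (D : rel T) x a b c :
  uniq [:: a; b; c] -> outdeg D x <= 2 -> ~~ [&& D x a, D x b & D x c].
Proof.
move=> u H; apply/negP => /and3P[h1 h2 h3].
have := @outdeg_seq T D x [:: a; b; c] u; rewrite /= h1 h2 h3 => /(_ isT).
by move=> /(leq_trans)/(_ H).
Qed.

Definition V := ('I_2 + 'I_2)%type.

Lemma mkE_proof (x y : V) : Hgraph x y -> is_edge Hgraph [set x; y].
Proof. by move=> h; apply/existsP; exists x; apply/existsP; exists y; rewrite h eqxx. Qed.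

Definition mkE (x y : V) (h : Hgraph x y) : edge Hgraph := exist _ [set x; y] (mkE_proof h).

Lemma neq_intro (e e' : edge Hgraph) z : z \in val e -> z \notin val e' -> e != e'.
Proof. by move=> h1 h2; apply/eqP => E; subst; rewrite h1 in h2. Qed.

Lemma lg_intro (e e' : edge Hgraph) z z' :
  z \in val e -> z \in val e' -> z' \in val e -> z' \notin val e' ->
  line_graph Hgraph e e'.
Proof.
move=> h1 h2 h3 h4; apply/andP; split; first exact: (neq_intro h3 h4).
by apply/set0Pn; exists z; rewrite inE h1 h2.
Qed.

Lemma or_sym (T : finType) (D : rel T) a b : D a b || D b a -> D b a || D a b.
Proof. by rewrite orbC. Qed.
Fixpoint allb n (P : seq bool -> bool) : bool :=
  if n is n'.+1 then allb n' (fun s => P (true :: s)) && allb n' (fun s => P (false :: s))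
  else P [::].
Lemma allbP n P : allb n P -> forall s, size s = n -> P s.
Proof.
elim: n P => [|n IH] P /=; first by move=> H [|//].
move=> /andP[H1 H2] [//|[] s] /= [Hs]; [exact: (IH _ H1) | exact: (IH _ H2)].
Qed.
Definition F (s : seq bool) : bool :=
  if s is [:: PQ; QP; AP; PA; AR; RA; PR; RP; AQ; QA; AS; SA; QS; SQ; RS; SR] then
  ~~ [&& [&& PQ||QP, AP||PA, AR||RA, PR||RP, AQ||QA, AS||SA, QS||SQ & RS||SR],
  [&& ~~(PA&&PR), ~~(PA&&PQ), ~~(PR&&PQ), ~~(QA&&QS), ~~(QA&&QP) & ~~(QS&&QP)],
  [&& ~~[&& AP,AR&AQ], ~~[&& AP,AR&AS], ~~[&& AP,AQ&AS], ~~[&& AR,AQ&AS],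
      ~~[&& RA,RP&RS] & ~~[&& SA,SQ&SR]],
  [|| PA&&RA, AP&&RP | AR&&PR], [|| QA&&SA, AQ&&SQ | AS&&QS] &
  [|| RA&&SA, AR&&SR | AS&&RS]] else true.
Lemma allF : allb 16 F. Proof. vm_compute. reflexivity. Qed.
Lemma final (PQ QP AP PA AR RA PR RP AQ QA AS SA QS SQ RS SR : bool) :
  [&& PQ||QP, AP||PA, AR||RA, PR||RP, AQ||QA, AS||SA, QS||SQ & RS||SR] ->
  [&& ~~(PA&&PR), ~~(PA&&PQ), ~~(PR&&PQ), ~~(QA&&QS), ~~(QA&&QP) & ~~(QS&&QP)] ->
  [&& ~~[&& AP,AR&AQ], ~~[&& AP,AR&AS], ~~[&& AP,AQ&AS], ~~[&& AR,AQ&AS],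
      ~~[&& RA,RP&RS] & ~~[&& SA,SQ&SR]] ->
  [|| PA&&RA, AP&&RP | AR&&PR] -> [|| QA&&SA, AQ&&SQ | AS&&QS] ->
  [|| RA&&SA, AR&&SR | AS&&RS] -> False.
Proof.
move=> H1 H2 H3 H4 H5 H6.
have := @allbP 16 F allF [:: PQ; QP; AP; PA; AR; RA; PR; RP; AQ; QA; AS; SA; QS; SQ; RS; SR] erefl.
by rewrite /F H1 H2 H3 H4 H5 H6.
Qed.

Lemma uniq3 (T : eqType) (a b c : T) : a != b -> a != c -> b != c -> uniq [:: a; b; c].
Proof. by move=> h1 h2 h3; rewrite /= !inE negb_or h1 h2 h3. Qed.

Ltac mem := match goal with h1 : is_true (?i != ?j), h2 : is_true (?j != ?i) |- _ =>
  rewrite /= !inE /= ?eqxx ?(negbTE h1) ?(negbTE h2) ?orbT // end.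

Lemma main_gen (i j : 'I_2) : i != j -> deg Hgraph (inr i) = 2 ->
  forall D : rel (edge Hgraph), orientation (line_graph Hgraph) D ->
  f_kernel_perfect D (f3 Hgraph (inr i)) -> False.
Proof.
move=> hij hdeg D [_ orient] [kp fb].
have hji : j != i by rewrite eq_sym.
have eij : (inr i == inr j :> V) = false by apply/eqP => [[/eqP]]; rewrite (negbTE hij).
pose a : V := inl ord0. pose b : V := inl ord_max.
pose v : V := inr i. pose w : V := inr j.
pose eA := @mkE a b (erefl true). pose eP := @mkE a v (erefl true).
pose eQ := @mkE b v (erefl true). pose eR := @mkE a w (erefl true).
pose eS := @mkE b w (erefl true).
have oAP : D eA eP || D eP eA by apply: orient; apply: (@lg_intro _ _ a b); mem.
have oAR : D eA eR || D eR eA by apply: orient; apply: (@lg_intro _ _ a b); mem.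
have oAQ : D eA eQ || D eQ eA by apply: orient; apply: (@lg_intro _ _ b a); mem.
have oAS : D eA eS || D eS eA by apply: orient; apply: (@lg_intro _ _ b a); mem.
have oPQ : D eP eQ || D eQ eP by apply: orient; apply: (@lg_intro _ _ v a); mem.
have oPR : D eP eR || D eR eP by apply: orient; apply: (@lg_intro _ _ a v); mem.
have oQS : D eQ eS || D eS eQ by apply: orient; apply: (@lg_intro _ _ b v); mem.
have oRS : D eR eS || D eS eR by apply: orient; apply: (@lg_intro _ _ w a); mem.
have nAP : eA != eP by apply: (@neq_intro _ _ b); mem.
have nAQ : eA != eQ by apply: (@neq_intro _ _ a); mem.
have nAR : eA != eR by apply: (@neq_intro _ _ b); mem.
have nAS : eA != eS by apply: (@neq_intro _ _ a); mem.
have nPQ : eP != eQ by apply: (@neq_intro _ _ a); mem.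
have nPR : eP != eR by apply: (@neq_intro _ _ v); mem.
have nPS : eP != eS by apply: (@neq_intro _ _ a); mem.
have nQR : eQ != eR by apply: (@neq_intro _ _ b); mem.
have nQS : eQ != eS by apply: (@neq_intro _ _ v); mem.
have nRS : eR != eS by apply: (@neq_intro _ _ a); mem.
have fP : outdeg D eP <= 1.
  by have := fb eP; rewrite /f3 /= !inE eqxx orbT hdeg.
have fQ : outdeg D eQ <= 1.
  by have := fb eQ; rewrite /f3 /= !inE eqxx orbT hdeg.
have fA : outdeg D eA <= 2.
  by have := fb eA; rewrite /f3 /= !inE.
have fR : outdeg D eR <= 2.
  by have := fb eR; rewrite /f3 /= !inE /w eij.
have fS : outdeg D eS <= 2.
  by have := fb eS; rewrite /f3 /= !inE /w eij.
have tAPR := triangle_sink kp nAP nAR nPR oAP oAR oPR.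
have tAQS := triangle_sink kp nAQ nAS nQS oAQ oAS oQS.
have tARS := triangle_sink kp nAR nAS nRS oAR oAS oRS.
apply: (@final (D eP eQ) (D eQ eP) (D eA eP) (D eP eA) (D eA eR) (D eR eA)
   (D eP eR) (D eR eP) (D eA eQ) (D eQ eA) (D eA eS) (D eS eA) (D eQ eS) (D eS eQ)
   (D eR eS) (D eS eR)).
- by rewrite oPQ oAP oAR oPR oAQ oAS oQS oRS.
- have nRQ : eR != eQ by rewrite eq_sym.
  have nSP : eS != eP by rewrite eq_sym.
  rewrite (no2 nAR fP) (no2 nAQ fP) (no2 nRQ fP).
  by rewrite (no2 nAS fQ) (no2 nAP fQ) (no2 nSP fQ).
  have nRQ : eR != eQ by rewrite eq_sym.
  by rewrite (no3 (uniq3 nPR nPQ nRQ) fA) (no3 (uniq3 nPR nPS nRS) fA)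
    (no3 (uniq3 nPQ nPS nQS) fA) (no3 (uniq3 nRQ nRS nQS) fA)
    (no3 (uniq3 nAP nAS nPS) fR) (no3 (uniq3 nAQ nAR nQR) fS).
- by [].
- by [].
- by [].
Qed.

Theorem mainTheorem19 :
  forall v : ('I_2 + 'I_2)%type, deg Hgraph v = 2 ->
  ~ (exists D : rel (edge Hgraph),
       orientation (line_graph Hgraph) D /\
       f_kernel_perfect D (f3 Hgraph v)).
Proof.
case=> [[[|[|//]] Hk]|[[|[|//]] Hk]] hdeg [D [hor hf]].
- have := @outdeg_seq _ Hgraph (inl (Ordinal Hk)) [:: inl ord_max; inr ord0; inr ord_max].
  by rewrite /outdeg -/(deg _ _) hdeg => /(_ isT isT).
- have := @outdeg_seq _ Hgraph (inl (Ordinal Hk)) [:: inl ord0; inr ord0; inr ord_max].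
  by rewrite /outdeg -/(deg _ _) hdeg => /(_ isT isT).
- exact: (@main_gen (Ordinal Hk) ord_max isT hdeg D hor hf).
- exact: (@main_gen (Ordinal Hk) ord0 isT hdeg D hor hf).
Qed.
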